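(* Let $h\in R$. Then for every $i\ge0$, the binary representation of $h$ does not end with the string $1(10)^i$.
   Context: Stern's sequence $(a(n))_{n\ge0}$: $a(0)=0$, $a(1)=1$, $a(2n)=a(n)$, $a(2n+1)=a(n)+a(n+1)$; $s(n)=a(n+1)$ for $n\ge0$. $R$ is the set of record-setters of $s$, i.e. indices $v\ge0$ with $s(i)<s(v)$ for all $i<v$. The binary representation of a positive integer has no leading zeros; $0$ is represented by the string $0$. $x^i$ denotes $i$-fold concatenation of the string $x$ ($x^0$ empty). *)

(* Defs.v *)
From mathcomp Require Import all_boot.
Set Implicit Arguments. Unset Strict Implicit. Unset Printing Implicit Defensive.

(* Stern's diatomic sequence a(n) computed with fuel: a(0)=0, a(1)=1,
   a(2n)=a(n), a(2n+1)=a(n)+a(n+1).  [stern_fuel k n] is correct whenever n <= k. *)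
Fixpoint stern_fuel (k n : nat) : nat :=
  match k with
  | 0 => 0
  | k'.+1 =>
    if n <= 1 then n
    else if odd n then stern_fuel k' n./2 + stern_fuel k' n./2.+1
    else stern_fuel k' n./2
  end.

Definition stern (n : nat) : nat := stern_fuel n n.

Definition s (n : nat) : nat := stern n.+1.

Definition record_setter (v : nat) : Prop := forall i, i < v -> s i < s v.

(* binary representation, most significant bit first, no leading zeros;
   0 is represented by the string "0" (i.e. [:: false]) *)
Fixpoint bin_pos (k n : nat) : seq bool :=
  match k with
  | 0 => [::]
  | k'.+1 => if n == 0 then [::] else rcons (bin_pos k' n./2) (odd n)
  end.

Definition bin (n : nat) : seq bool :=
  if n == 0 then [:: false] else bin_pos n n.

Definition spow (x : seq bool) (i : nat) : seq bool := flatten (nseq i x).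

Definition pat (i : nat) : seq bool := true :: spow [:: true; false] i.

Lemma stern_check :
  [seq stern n | n <- iota 0 17] =
  [:: 0; 1; 1; 2; 1; 3; 2; 3; 1; 4; 3; 5; 2; 5; 3; 4; 1].
Proof. by []. Qed.

Lemma bin_check : bin 0 = [:: false] /\ bin 6 = [:: true; true; false]
  /\ bin 13 = [:: true; true; false; true].
Proof. by []. Qed.

Lemma suffix_check : suffix (pat 1) (bin 6) /\ ~~ suffix (pat 1) (bin 13).
Proof. by []. Qed.

(* Main.v *)
Require Import Defs.
From mathcomp Require Import all_boot.
From mathcomp Require Import zify.

Lemma stern_fuel_agree k1 k2 n : n <= k1 -> n <= k2 -> stern_fuel k1 n = stern_fuel k2 n.
Proof.
elim: k1 k2 n => [|k1 IH] [|k2] n /= H1 H2.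
- by [].
- by have -> : n = 0 by lia.
- by have -> : n = 0 by lia.
case: ifP => // Hn.
move/negbT: Hn; rewrite -ltnNge => Hn.
have hd := odd_double_half n.
move: hd; case: (odd n) => /= hd.
  by rewrite !(IH k2) //; lia.
by rewrite (IH k2) //; lia.
Qed.

Lemma fuel_S k n : stern_fuel k.+1 n =
  if n <= 1 then n
  else if odd n then stern_fuel k n./2 + stern_fuel k n./2.+1
  else stern_fuel k n./2.
Proof. by []. Qed.

Lemma stern_step n : 1 < n ->
  stern n = if odd n then stern n./2 + stern n./2.+1 else stern n./2.
Proof.
move=> Hn; case E: n Hn => [|m] // Hm; rewrite -E.
rewrite {1}/stern {1}E fuel_S ifF; last by apply/negbTE; rewrite -ltnNge E.
have hd := odd_double_half n.
move: hd; case: (odd n) => hd.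
  by rewrite /stern; congr (_ + _); apply: stern_fuel_agree; move: hd; rewrite /=; lia.
by rewrite /stern; apply: stern_fuel_agree; move: hd; rewrite /=; lia.
Qed.

Lemma stern_even n : stern n.*2 = stern n.
Proof.
case: n => [|n] //.
rewrite stern_step; last by rewrite doubleS.
by rewrite odd_double doubleK.
Qed.

Lemma stern_odd n : stern n.*2.+1 = stern n + stern n.+1.
Proof.
case: n => [|n] //.
rewrite stern_step; last by rewrite doubleS.
by rewrite /= odd_double /= uphalf_double.
Qed.

Definition T n := 4 * n + 2.

Fixpoint coef (i : nat) : nat * nat :=
  match i with 0 => (1, 0) | i'.+1 => let: (a, b) := coef i' in (a + b, a + 2 * b) end.

Lemma sternT n : stern (T n) = stern n + stern n.+1 /\ stern (T n).+1 = stern n + 2 * stern n.+1.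
Proof.
have e1 : T n = (n.*2.+1).*2 by rewrite /T; lia.
have e2 : (T n).+1 = (n.*2.+1).*2.+1 by rewrite /T; lia.
rewrite e2 e1 stern_even stern_odd stern_odd -doubleS stern_even ?stern_odd; split => //; lia.
Qed.

Lemma sternTi i n : stern (iter i T n) = (coef i).1 * stern n + (coef i).2 * stern n.+1 /\
  stern (iter i T n).+1 = (coef i).2 * stern n + ((coef i).1 + (coef i).2) * stern n.+1.
Proof.
elim: i => [|i [IH1 IH2]] /=; first by split; lia.
case: (coef i) IH1 IH2 => a b /= IH1 IH2.
have [E1 E2] := sternT (iter i T n).
rewrite E1 E2 IH1 IH2; split; lia.
Qed.

Lemma Tlt i x : (iter i T x).*2.+1 <= iter i T x.*2.+1.
Proof.
elim: i => [|i IH] /=; first by [].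
move: IH; rewrite /T; lia.
Qed.

Definition num (l : seq bool) := foldl (fun a (b : bool) => 2 * a + b) 0 l.

Lemma num_rcons l b : num (rcons l b) = 2 * num l + b.
Proof. by rewrite /num foldl_rcons. Qed.

Lemma num_bin_pos k n : n <= k -> num (bin_pos k n) = n.
Proof.
elim: k n => [|k IH] n Hn /=; first by move: Hn; rewrite leqn0 => /eqP ->.
case: eqP => [->|Hn0] //.
rewrite num_rcons IH; last first.
  have hd := odd_double_half n; move: hd Hn Hn0; case: (odd n) => /=; lia.
have hd := odd_double_half n; move: hd; case: (odd n) => /=; lia.
Qed.

Lemma num_bin h : num (bin h) = h.
Proof. rewrite /bin; case: eqP => [->|_] //; exact: num_bin_pos. Qed.

Lemma foldl_spow i acc :
  foldl (fun a (b : bool) => 2 * a + b) acc (spow [:: true; false] i) = iter i T acc.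
Proof.
elim: i acc => [|i IH] acc //=.
rewrite /spow /= -/(spow _ i) IH -iterS iterSr.
by congr (iter _ _ _); rewrite /T; lia.
Qed.

Theorem mainTheorem5 (h : nat) :
  record_setter h -> forall i : nat, ~~ suffix (pat i) (bin h).
Proof.
move=> Hr i; apply/negP => /suffixP [t Ht].
have Hh : h = iter i T (num t).*2.+1.
  rewrite -(num_bin h) Ht /num foldl_cat /pat /= foldl_spow; congr (iter _ _ _); rewrite -/(num t); lia.
set x := num t in Hh.
have Hlt : (iter i T x).*2 < h by rewrite Hh; exact: Tlt.
have := Hr _ Hlt; rewrite /s Hh stern_odd.
have [A1 A2] := sternTi i x.
have [_ B2] := sternTi i x.*2.+1.
rewrite A1 A2 B2 stern_odd -doubleS stern_even.
case: (coef i) => a b /=; lia.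
Qed.
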